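(* For every positive integer $k$ there exists $c_k>0$ such that every graph $G$ on $n\geq 2$ vertices that contains neither the path $P_k$ nor its complement $\overline{P_k}$ as an induced subgraph contains two disjoint vertex sets $X,Y$, each of size at least $c_k\cdot n$, such that either every vertex of $X$ is adjacent to every vertex of $Y$, or no vertex of $X$ is adjacent to any vertex of $Y$ (no condition is imposed on edges inside $X$ or inside $Y$). Consequently, for every $k$ there exists $c'_k>0$ such that every graph on $n$ vertices with no induced $P_k$ and no induced $\overline{P_k}$ contains a clique or a stable set of size at least $n^{c'_k}$.
   Context: All graphs are finite and simple. $P_k$ denotes the path on $k$ vertices and $\overline{P_k}$ its complement graph. ''Contains $H$ as an induced subgraph'' means some subset of vertices induces a graph isomorphic to $H$. *)

(* Defs.v *)
From mathcomp Require Import all_boot.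
From Stdlib Require Import Reals.
Set Implicit Arguments. Unset Strict Implicit. Unset Printing Implicit Defensive.

Definition simple_graph (T : finType) (e : rel T) : Prop :=
  symmetric e /\ irreflexive e.

Definition path_rel (k : nat) : rel 'I_k :=
  fun i j => (i.+1 == j :> nat) || (j.+1 == i :> nat).

Arguments path_rel k : clear implicits.

Definition copath_rel (k : nat) : rel 'I_k :=
  fun i j => (i != j) && ~~ path_rel k i j.

Arguments copath_rel k : clear implicits.

Definition contains_induced (T : finType) (e : rel T) (k : nat) (h : rel 'I_k) : Prop :=
  exists f : 'I_k -> T, injective f /\ forall i j : 'I_k, i != j -> e (f i) (f j) = h i j.

Definition is_clique (T : finType) (e : rel T) (S : {set T}) : Prop :=
  forall x y, x \in S -> y \in S -> x != y -> e x y.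

Definition is_stable (T : finType) (e : rel T) (S : {set T}) : Prop :=
  forall x y, x \in S -> y \in S -> ~~ e x y.

Definition complete_pair (T : finType) (e : rel T) (X Y : {set T}) : Prop :=
  forall x y, x \in X -> y \in Y -> e x y.
Definition anticomplete_pair (T : finType) (e : rel T) (X Y : {set T}) : Prop :=
  forall x y, x \in X -> y \in Y -> ~~ e x y.

(* Main.v *)
Require Import Defs.
From mathcomp Require Import all_boot.
From Stdlib Require Import Reals.
From Stdlib Require Import Lra Psatz Classical.
From mathcomp Require Import all_boot.
From mathcomp Require Import zify.
Set Implicit Arguments. Unset Strict Implicit. Unset Printing Implicit Defensive.


Section Gy.
Variables (T : finType) (e : rel T).
Hypothesis esym : symmetric e.
Hypothesis eirr : irreflexive e.
Implicit Types S X Y Z C K W : {set T}.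

Definition closedb (S X : {set T}) := [forall x in X, forall y in S, (y \in X) || ~~ e x y].

Lemma closedP S X : reflect (forall x y, x \in X -> y \in S -> y \notin X -> ~~ e x y) (closedb S X).
Proof.
apply: (iffP forall_inP) => [H x y xX yS yX|H x xX].
  by move: (H x xX) => /forall_inP /(_ y yS); rewrite (negbTE yX).
apply/forall_inP => y yS; case: (boolP (y \in X)) => //= yX; exact: H.
Qed.

Definition conn (K : {set T}) := forall Y, Y \subset K -> closedb K Y -> Y = set0 \/ Y = K.

Definition noanti (Z : {set T}) (a : nat) := forall X Y : {set T}, X \subset Z -> Y \subset Z ->
  [disjoint X & Y] -> a <= #|X| -> a <= #|Y| -> anticomplete_pair e X Y -> False.

Lemma noanti_sub Z Z' a : Z' \subset Z -> noanti Z a -> noanti Z' a.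
Proof. move=> sZ H X Y XZ YZ; apply: H; exact: subset_trans sZ. Qed.

Lemma closed_self S : closedb S S.
Proof. by apply/closedP => x y _ ->. Qed.

Lemma closed_anti S X : closedb S X -> anticomplete_pair e X (S :\: X).
Proof. move/closedP=> H x y xX; rewrite in_setD => /andP[yX yS]; exact: H. Qed.

Lemma closed_compl S X : closedb S X -> closedb S (S :\: X).
Proof.
move/closedP=> H; apply/closedP => x y; rewrite !in_setD => /andP[xX xS] yS.
rewrite yS andbT negbK => yX; rewrite esym; exact: H.
Qed.

Lemma closed_trans S X Y : Y \subset X -> closedb S X -> closedb X Y -> closedb S Y.
Proof.
move=> /subsetP YX /closedP HX /closedP HY; apply/closedP => x y xY yS yY.
case: (boolP (y \in X)) => yX; first exact: HY.
exact: HX (YX _ xY) yS yX.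
Qed.


Lemma big_comp a C : 0 < a -> noanti C a -> 3 * a <= #|C| ->
  exists K, [/\ K \subset C, closedb C K, conn K & #|C| < #|K| + a].
Proof.
move=> a0 hna hC.
pose P m := [exists X : {set T}, [&& X \subset C, closedb C X, a <= #|X| & #|X| == m]].
have exP : exists m, P m.
  exists #|C|; apply/existsP; exists C; rewrite subxx closed_self eqxx /=; lia.
case: (ex_minnP exP) => m /existsP [K /and4P [KC cK aK /eqP Km]] minm.
have hsm : #|C :\: K| < a.
  rewrite ltnNge; apply/negP => h; apply: (hna K (C :\: K)) => //; first exact: subsetDl.
    by rewrite disjoints_subset; apply/subsetP => x xK; rewrite !inE xK.
  exact: closed_anti.
have hbig : #|C| < #|K| + a by move: hsm; rewrite cardsDS //; lia.
exists K; split => // Y YK cY.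
case: (eqVneq Y set0) => [->|Yn0]; [by left|right].
apply/eqP; rewrite eqEcard YK /=; rewrite leqNgt; apply/negP => hlt.
have cKY : closedb C (K :\: Y) by apply: (closed_trans (subsetDl K Y) cK); exact: closed_compl.
have cCY : closedb C Y by exact: closed_trans YK cK cY.
have hYK : #|K :\: Y| = #|K| - #|Y| by rewrite cardsDS.
have Y0 : 0 < #|Y| by rewrite card_gt0.
have [hY|hY] := leqP a #|Y|.
  have : P #|Y|.
    apply/existsP; exists Y; rewrite cCY hY eqxx (subset_trans YK KC) //.
  move/minm; lia.
have : P #|K :\: Y|.
  apply/existsP; exists (K :\: Y); rewrite cKY eqxx (subset_trans (subsetDl K Y) KC) /=.
  rewrite hYK; lia.
move/minm; rewrite hYK; lia.
Qed.


Definition ipath (x0 : T) (p : seq T) :=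
  uniq p /\ forall i j, i < j -> j < size p -> e (nth x0 p i) (nth x0 p j) = (j == i.+1).

Lemma ipath_rcons x0 p u : ipath x0 p -> u \notin p ->
  (forall i, i < size p -> e (nth x0 p i) u = (i.+1 == size p)) -> ipath x0 (rcons p u).
Proof.
move=> [up hp] up' hu; split; first by rewrite rcons_uniq up' up.
move=> i j ij; rewrite size_rcons ltnS !nth_rcons => jp.
have ip : i < size p by apply: leq_trans ij jp.
rewrite ip; case: (ltnP j (size p)) => jp'; first exact: hp.
have -> : j = size p by apply/eqP; rewrite eqn_leq jp jp'.
by rewrite eqxx hu // eq_sym.
Qed.

Lemma ipath_induced x0 k p : ipath x0 p -> size p = k -> contains_induced e (path_rel k).
Proof.
move=> [up hp] sp; exists (fun i : 'I_k => nth x0 p i); split.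
  move=> i j /eqP; rewrite nth_uniq ?sp // => /eqP; exact: val_inj.
move=> i j ij; rewrite /path_rel.
have [lt|gt|eq] := ltngtP i j.
- rewrite hp // ?sp //.
  have -> : (j.+1 == i :> nat) = false by apply/negbTE; rewrite neq_ltn; apply/orP; right; apply: ltn_trans lt _.
  by rewrite orbF eq_sym.
- rewrite esym hp // ?sp //.
  by have -> : (i.+1 == j :> nat) = false by apply/negbTE; rewrite neq_ltn; apply/orP; right; apply: ltn_trans gt _.
- by move: ij; rewrite (val_inj eq) eqxx.
Qed.

Definition attach v C := forall Z, Z \subset C -> closedb C Z -> Z != set0 -> exists2 z, z \in Z & e v z.

Section Walk.
Variables (W : {set T}) (D a : nat) (x0 : T).
Hypothesis a0 : 0 < a.
Hypothesis hna : noanti W a.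
Hypothesis hdeg : forall x, x \in W -> #|[set y in W | e x y]| <= D.

Definition inv p C := [/\ 0 < size p, {subset p <= W}, C \subset W, (forall y, y \in C -> y \notin p)
  & (forall y i, y \in C -> i.+1 < size p -> ~~ e (nth x0 p i) y) /\ attach (last x0 p) C].

Lemma walk_step p C : ipath x0 p -> inv p C -> D + 3 * a <= #|C| ->
  exists u K, [/\ ipath x0 (rcons p u), inv (rcons p u) K & #|C| <= #|K| + D + a].
Proof.
move=> ip [p0 pW CW Cp [Cn att]] hC.
set v := last x0 p.
have vW : v \in W.
  rewrite /v; move: p0 pW; clear -p; case: p => // x s _ pW; apply: pW; by rewrite /= mem_last.
set C' := [set y in C | ~~ e v y].
have hC' : #|C| <= #|C'| + D.
  have : [set y in C | e v y] \subset [set y in W | e v y].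
    by apply/subsetP => y; rewrite !inE => /andP[yC ->]; rewrite (subsetP CW _ yC).
  move/subset_leq_card => h1; have h2 := hdeg vW.
  have := cardsID [set y in C | e v y] C.
  have -> : C :&: [set y in C | e v y] = [set y in C | e v y] by apply/setP => y; rewrite !inE andbA andbb.
  have -> : C :\: [set y in C | e v y] = C' by apply/setP => y; rewrite !inE; case: (y \in C); rewrite ?andbF ?andbT.
  lia.
have [K [KC' cK conK hK]] : exists K, [/\ K \subset C', closedb C' K, conn K & #|C'| < #|K| + a].
  apply: big_comp => //; last lia.
  by apply: noanti_sub hna; apply: subset_trans CW; apply/subsetP => y; rewrite inE => /andP[].
have KC : K \subset C by apply: subset_trans KC' _; apply/subsetP => y; rewrite inE => /andP[].
have Kv : forall y, y \in K -> ~~ e v y by move=> y /(subsetP KC'); rewrite inE => /andP[].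
have Kn0 : K != set0 by rewrite -card_gt0; lia.
have : exists u, [/\ u \in C, e v u & (exists2 z, z \in K & e u z)].
  case: (boolP [exists u in C, e v u && [exists z in K, e u z]]).
    move/exists_inP => [u uC /andP[vu /exists_inP [z zK uz]]]; exists u; split => //; by exists z.
  move/exists_inP => H.
  have cCK : closedb C K.
    apply/closedP => x y xK yC yK.
    case: (boolP (e v y)) => vy.
      rewrite esym; apply/negP => yx; apply: H; exists y => //; rewrite vy /=; apply/exists_inP; by exists x.
    by move/closedP: cK; apply => //; rewrite inE yC vy.
  have [z zK vz] := att K KC cCK Kn0.
  by move: (Kv z zK); rewrite vz.
case=> u [uC vu [z zK uz]].
have up : u \notin p by exact: Cp.
have hu : forall i, i < size p -> e (nth x0 p i) u = (i.+1 == size p).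
  move=> i ilt; case: (ltngtP i.+1 (size p)) => h.
  - by rewrite (negbTE (Cn u i uC h)).
  - lia.
  - have -> : nth x0 p i = v by rewrite /v -nth_last -h.
    by rewrite vu ?h ?eqxx.
exists u, K; split.
- exact: ipath_rcons.
- split.
  + by rewrite size_rcons.
  + by move=> y; rewrite mem_rcons inE => /orP[/eqP->|]; [apply: (subsetP CW) | apply: pW].
  + exact: subset_trans KC CW.
  + move=> y yK; rewrite mem_rcons inE negb_or (Cp y (subsetP KC _ yK)) andbT.
    by apply/eqP => yu; move: (Kv y yK); rewrite yu vu.
  + split.
    move=> y i yK; rewrite size_rcons ltnS nth_rcons => ilt.
    rewrite ilt; case: (ltngtP i.+1 (size p)) => h.
    * exact: Cn (subsetP KC _ yK) h.
    * by rewrite ltnNge ilt in h.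
    * have -> : nth x0 p i = v by rewrite /v -nth_last -h.
      exact: Kv.
  + rewrite last_rcons => Z ZK cZ Zn0.
    case: (conK Z ZK cZ) => ZE; first by move: Zn0; rewrite ZE eqxx.
    by rewrite ZE; exists z.
- lia.
Qed.

Lemma walk_loop k : forall j p C, ipath x0 p -> inv p C -> size p + j = k -> j * (D + 3 * a) <= #|C| ->
  contains_induced e (path_rel k).
Proof.
elim=> [|j IH] p C ip iv hs hC; first by apply: (ipath_induced ip); rewrite -hs addn0.
have hC' : D + 3 * a <= #|C| by move: hC; rewrite mulSn; lia.
have [u [K [ip' iv' hK]]] := walk_step ip iv hC'.
apply: (IH _ K ip' iv'); first by rewrite size_rcons -hs; lia.
move: hC; rewrite mulSn; lia.
Qed.

End Walk.

Lemma gyarfas W D a k : 0 < a -> noanti W a -> (forall x, x \in W -> #|[set y in W | e x y]| <= D) ->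
  0 < k -> k * (D + 3 * a) < #|W| -> contains_induced e (path_rel k).
Proof.
move=> a0 hna hdeg k0 hW.
have h3 : 3 * a <= #|W| by move: hW; case: k k0 => // k _; rewrite mulSn; lia.
have [X [XW cX conX hX]] := big_comp a0 hna h3.
have : X != set0 by rewrite -card_gt0; move: hW; case: k k0 => // k _; rewrite mulSn; lia.
case/set0Pn => v vX.
pose C := X :\ v.
have ip : ipath v [:: v] by split => // i j ij; rewrite /= ltnS leqn0 => /eqP j0; move: ij; rewrite j0.
have iv : inv W v [:: v] C.
  split => //.
  - by move=> y; rewrite inE => /eqP->; apply: (subsetP XW).
  - by apply: subset_trans XW; apply: subsetDl.
  - by move=> y; rewrite !inE => /andP[].
  split; first by move=> y [|i].
  move=> Z ZC cZ Zn0 /=.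
    case: (boolP [exists z in Z, e v z]); first by move/exists_inP.
    move/exists_inP => H; exfalso.
    have cXZ : closedb X Z.
      apply/closedP => x y xZ yX yZ.
      case: (eqVneq y v) => [->|yv].
        by rewrite esym; apply/negP => vx; apply: H; exists x.
      by move/closedP: cZ; apply => //; rewrite !inE yv.
    have ZX : Z \subset X by apply: subset_trans ZC _; apply: subsetDl.
    case: (conX Z ZX cXZ) => ZE; first by move: Zn0; rewrite ZE eqxx.
    have : v \in Z by rewrite ZE.
    by move/(subsetP ZC); rewrite !inE eqxx.
apply: (walk_loop a0 hna hdeg (j := k.-1) ip iv); first by rewrite /= add1n prednK.
have : #|X| = 1 + #|C| by rewrite (cardsD1 v X) vX.
move: hW; case: k k0 => // k _; rewrite mulSn /=; lia.
Qed.

End Gy.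


Definition ce (T : finType) (e : rel T) : rel T := fun x y => (x != y) && ~~ e x y.
Definition deg (T : finType) (e : rel T) x (B : {set T}) := #|[set y in B | e x y]|.

Lemma ce_sym (T : finType) (e : rel T) : symmetric e -> symmetric (ce e).
Proof. by move=> s x y; rewrite /ce eq_sym s. Qed.
Lemma ce_irr (T : finType) (e : rel T) : irreflexive (ce e).
Proof. by move=> x; rewrite /ce eqxx. Qed.

Section Split.
Variables (T : finType) (e : rel T).
Hypothesis esym : symmetric e.
Hypothesis eirr : irreflexive e.
Implicit Types S X Y Z C K W R A B : {set T}.
Variables (k M h : nat) (W0 R0 : {set T}) (x0 : T).
Hypothesis hfree : ~ contains_induced e (path_rel k).
Hypothesis M0 : 0 < M.

Definition sinv p W R := [/\ ipath e x0 p, (W :|: R) \subset (W0 :|: R0), [disjoint W & R],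
   (forall y, y \in W :|: R -> y \notin p) &
   [/\ (forall y i, y \in W -> i < size p -> e (nth x0 p i) y = (i.+1 == size p)),
       (forall y i, y \in R -> i < size p -> e (nth x0 p i) y = false),
       h <= M ^ size p * #|W| & h <= M ^ size p * #|R|]].

Definition split_concl := exists A B, [/\ [disjoint A & B], (A :|: B) \subset (W0 :|: R0),
   h <= 2 * M ^ k * #|A|, h <= M ^ k * #|B| &
   ((forall a, a \in A -> M * deg e a B < #|B|) \/ (forall a, a \in A -> M * deg (ce e) a B < #|B|))].

Lemma split_loop : forall j p W R, sinv p W R -> size p + j = k -> split_concl.
Proof.
elim=> [|j IH] p W R [ip sub dis nin [hW hR szW szR]] hs.
  by exfalso; apply: hfree; apply: (ipath_induced esym ip); rewrite -hs addn0.
have Mpk : M ^ size p <= M ^ k by rewrite leq_pexp2l //; lia.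
pose Bs := [set u in W | M * deg e u R < #|R|].
pose Bd := [set u in W | M * deg (ce e) u R < #|R|].
case: (boolP [exists u in W, (#|R| <= M * deg e u R) && (#|R| <= M * deg (ce e) u R)]).
  move/exists_inP => [u uW /andP[g1 g2]].
  pose W' := [set y in R | e u y]; pose R' := [set y in R | ce e u y].
  have uR : u \notin R by apply/negP => uR; move: dis; rewrite disjoints_subset => /subsetP/(_ u uW); rewrite inE uR.
  apply: (IH (rcons p u) W' R'); last by rewrite size_rcons addSnnS.
  have W'R : W' \subset R by apply/subsetP => y; rewrite inE => /andP[].
  have R'R : R' \subset R by apply/subsetP => y; rewrite inE => /andP[].
  split.
  - apply: ipath_rcons => //; first by apply: nin; rewrite inE uW.
    by move=> i ilt; apply: hW.
  - apply: subset_trans sub; rewrite subUset; apply/andP; split; apply: subset_trans (subsetUr _ _);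
      [exact: W'R|exact: R'R].
  - rewrite disjoints_subset; apply/subsetP => y; rewrite !inE => /andP[_ uy]; by rewrite /ce uy !andbF.
  - move=> y yWR.
    have yR : y \in R by move: yWR; rewrite inE => /orP[/(subsetP W'R)|/(subsetP R'R)].
    rewrite mem_rcons inE negb_or nin ?inE ?yR ?orbT // andbT.
    by apply/eqP => yu; move: uR; rewrite -yu yR.
  - split.
    + move=> y i; rewrite inE => /andP[yR uy]; rewrite size_rcons ltnS nth_rcons leq_eqVlt.
      case/orP => [/eqP ->|ilt]; first by rewrite ltnn !eqxx uy.
      rewrite ilt hR //; symmetry; apply/eqP; lia.
    + move=> y i; rewrite inE => /andP[yR]; rewrite /ce => /andP[_ uy].
      rewrite size_rcons ltnS nth_rcons leq_eqVlt.
      case/orP => [/eqP ->|ilt]; first by rewrite ltnn !eqxx (negbTE uy).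
      by rewrite ilt hR.
    + rewrite size_rcons expnS (mulnC M) -mulnA; apply: leq_trans szR _.
      by rewrite leq_mul2l; apply/orP; right; exact: g1.
    + rewrite size_rcons expnS (mulnC M) -mulnA; apply: leq_trans szR _.
      by rewrite leq_mul2l; apply/orP; right; exact: g2.
move/exists_inP => H.
have WB : W \subset Bs :|: Bd.
  apply/subsetP => u uW; rewrite !inE uW /=.
  case: (ltnP (M * deg e u R) #|R|) => //= g1; rewrite ltnNge; apply/negP => g2; apply: H; exists u => //.
  by rewrite g1 g2.
have cWB : #|W| <= #|Bs| + #|Bd| by apply: leq_trans (subset_leq_card WB) (leq_card_setU _ _).
have BsW : Bs \subset W by apply/subsetP => y; rewrite inE => /andP[].
have BdW : Bd \subset W by apply/subsetP => y; rewrite inE => /andP[].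
have dB : forall A, A \subset W -> [disjoint A & R].
  move=> A AW; move: dis; rewrite !disjoints_subset => /(subset_trans AW) //.
have sB : forall A, A \subset W -> A :|: R \subset W0 :|: R0.
  move=> A AW; apply: subset_trans sub; by rewrite setSU.
have szR' : h <= M ^ k * #|R| by apply: leq_trans szR _; rewrite leq_mul2r Mpk orbT.
case: (leqP #|Bd| #|Bs|) => hB.
- exists Bs, R; split => //; [exact: dB|exact: sB| |].
    have h2 : #|W| <= 2 * #|Bs| by lia.
    by apply: leq_trans szW _; rewrite (mulnC 2) -mulnA; exact: leq_mul Mpk h2.
  by left => a; rewrite inE => /andP[].
- exists Bd, R; split => //; [exact: dB|exact: sB| |].
    have h2 : #|W| <= 2 * #|Bd| by lia.
    by apply: leq_trans szW _; rewrite (mulnC 2) -mulnA; exact: leq_mul Mpk h2.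
  by right => a; rewrite inE => /andP[].
Qed.

Lemma split_main : [disjoint W0 & R0] -> h <= #|W0| -> h <= #|R0| -> split_concl.
Proof.
move=> dis hW hR; apply: (@split_loop k [::] W0 R0) => //.
split => //; rewrite ?expn0 ?mul1n //.
Qed.

End Split.


Section Cnt.
Variables (T : finType).
Implicit Types X Y B : {set T}.

Lemma degE (f : rel T) x Y : deg f x Y = \sum_(y in Y) f x y.
Proof.
rewrite /deg -sum1_card big_mkcond /= [RHS]big_mkcond /=; apply: eq_bigr => y _.
by rewrite !inE; case: (y \in Y); case: (f x y).
Qed.

Lemma sum_disjU (F : T -> nat) X Y : [disjoint X & Y] ->
  \sum_(i in X :|: Y) F i = \sum_(i in X) F i + \sum_(i in Y) F i.
Proof.
move=> dis; rewrite (big_setID X).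
have -> : (X :|: Y) :&: X = X by apply/setP => i; rewrite !inE; case: (i \in X); case: (i \in Y).
have -> : (X :|: Y) :\: X = Y.
  apply/setP => i; rewrite !inE; case iX: (i \in X); case iY: (i \in Y) => //=.
  by move: dis; rewrite disjoints_subset => /subsetP/(_ i iX); rewrite inE iY.
done.
Qed.

Lemma deg_disjU (f : rel T) x X Y : [disjoint X & Y] -> deg f x (X :|: Y) = deg f x X + deg f x Y.
Proof. by move=> dis; rewrite !degE sum_disjU. Qed.

Lemma double_count (f : rel T) : symmetric f -> forall X Y,
  \sum_(x in X) deg f x Y = \sum_(y in Y) deg f y X.
Proof.
move=> fs X Y; under eq_bigr do rewrite degE; under [RHS]eq_bigr do rewrite degE.
rewrite exchange_big /=; apply: eq_bigr => y _; apply: eq_bigr => x _; by rewrite fs.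
Qed.

Lemma markov (F : T -> nat) B t :
  #|B :\: [set y in B | F y <= t]| * t.+1 <= \sum_(y in B) F y.
Proof.
set H := B :\: _.
have HB : H \subset B by apply: subsetDl.
rewrite (big_setID H) /=.
have -> : B :&: H = H by apply/setIidPr.
rewrite -sum_nat_const; apply: leq_trans (leq_addr _ _).
apply: leq_sum => y; rewrite !inE => /andP[H1 yB]; move: H1; rewrite yB /= -ltnNge; done.
Qed.

Lemma subset_card (A : {set T}) m : m <= #|A| -> exists B, B \subset A /\ #|B| = m.
Proof.
elim: m => [|m IH] hm; first by exists set0; rewrite sub0set cards0.
have [B [BA hB]] := IH (ltnW hm).
have : A :\: B != set0 by rewrite -card_gt0 cardsDS //; lia.
case/set0Pn => x; rewrite inE => /andP[xB xA].
exists (x |: B); rewrite cardsU1 xB hB; split => //.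
by rewrite subUset sub1set xA.
Qed.

End Cnt.


Definition famU (T : finType) (fam : seq {set T}) : {set T} := [set x | has (fun P : {set T} => x \in P) fam].

Fixpoint fgood (T : finType) (M : nat) (f : rel T) (fam : seq {set T}) : Prop :=
  match fam with
  | [::] => True
  | B :: rest => [/\ [disjoint B & famU rest], (forall x, x \in famU rest -> M * deg f x B < #|B|) & fgood M f rest]
  end.

Lemma famU_cons (T : finType) (B : {set T}) rest x : (x \in famU (B :: rest)) = (x \in B) || (x \in famU rest).
Proof. by rewrite !inE. Qed.

Lemma famU_sub (T : finType) (fam : seq {set T}) (A : {set T}) : (forall P, P \in fam -> P \subset A) -> famU fam \subset A.
Proof.
move=> H; apply/subsetP => x; rewrite inE => /hasP [P Pf xP]; exact: (subsetP (H P Pf)).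
Qed.

Section Trim.
Variables (T : finType) (f : rel T) (M s : nat).
Hypothesis fsym : symmetric f.

Lemma trim : forall fam, fgood M f fam -> (forall P, P \in fam -> 2 * s <= #|P|) ->
  exists W : {set T}, [/\ W \subset famU fam, #|W| = s * size fam &
     M * \sum_(x in W) deg f x W <= M * size fam * s ^ 2 + 4 * s ^ 2 * size fam ^ 2].
Proof.
elim=> [|B rest IH] /=.
  move=> _ _; exists set0; rewrite cards0 big_set0 sub0set; split => //; lia.
move=> [dis sp gr] hsz.
have [U [Usub hU hsum]] := IH gr (fun P HP => hsz P (@mem_behead _ (B :: rest) _ HP)).
have hB : 2 * s <= #|B| by apply: hsz; rewrite inE eqxx.
have S1 : M * \sum_(y in B) deg f y U <= #|U| * #|B|.
  rewrite -double_count // big_distrr /= -sum_nat_const; apply: leq_sum => x xU.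
  by apply: ltnW; apply: sp; apply: (subsetP Usub).
pose L := [set y in B | M * deg f y U <= 2 * #|U|].
have mk := markov (fun y => M * deg f y U) B (2 * #|U|).
rewrite -/L in mk.
rewrite -big_distrr /= in mk.
have LB : L \subset B by apply/subsetP => y; rewrite inE => /andP[].
have cL : #|B| = #|L| + #|B :\: L| by rewrite cardsDS //; have := subset_leq_card LB; lia.
have hL : s <= #|L|.
  have h2 : #|B :\: L| * (2 * #|U|).+1 <= #|U| * #|B| by apply: leq_trans mk S1.
  nia.
have [QB [QBL hQB]] := subset_card hL.
have QBB : QB \subset B by apply: subset_trans QBL LB.
have disQU : [disjoint QB & U].
  move: dis; rewrite !disjoints_subset => h; apply: subset_trans QBB (subset_trans h _).
  by rewrite setCS.
exists (QB :|: U); split.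
- rewrite subUset; apply/andP; split; apply/subsetP => x xX; rewrite famU_cons.
    by rewrite (subsetP QBB _ xX).
  by rewrite (subsetP Usub _ xX) orbT.
- by rewrite cardsU (disjoint_setI0 disQU) cards0 hQB hU /=; lia.
rewrite sum_disjU //.
under eq_bigr do rewrite deg_disjU //.
under [X in _ + X]eq_bigr do rewrite deg_disjU //.
rewrite !big_split /= (double_count fsym U QB).
have t1 : \sum_(x in QB) deg f x QB <= s * s.
  rewrite -hQB -sum_nat_const; apply: leq_sum => x _; apply: subset_leq_card.
  by apply/subsetP => y; rewrite inE => /andP[].
have t2 : M * \sum_(x in QB) deg f x U <= s * (2 * #|U|).
  rewrite big_distrr /= -hQB -sum_nat_const; apply: leq_sum => x xQ.
  by move: (subsetP QBL _ xQ); rewrite inE => /andP[].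
rewrite hU in t2 hsum.
rewrite !mulnDr.
nia.
Qed.

End Trim.

Section Family.
Variables (T : finType) (e : rel T).
Hypothesis esym : symmetric e.
Hypothesis eirr : irreflexive e.
Variables (k M : nat).
Hypothesis hfree : ~ contains_induced e (path_rel k).
Hypothesis M0 : 0 < M.

Definition relc (c : bool) : rel T := if c then ce e else e.
Definition QQ := 8 * M ^ k.

Definition Fm (c : bool) (m : nat) (S : {set T}) (n : nat) :=
  exists fam : seq {set T}, [/\ size fam = m, fgood M (relc c) fam &
     forall P, P \in fam -> P \subset S /\ #|S| <= QQ ^ n * #|P|].

Lemma QQ_gt0 : 0 < QQ.
Proof. by rewrite /QQ muln_gt0 expn_gt0 M0. Qed.

Lemma split_step (S : {set T}) : 2 <= #|S| -> exists (A B : {set T}) c,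
  [/\ [disjoint A & B], A \subset S, B \subset S, #|S| <= QQ * #|A|
    & (#|S| <= QQ * #|B| /\ forall a, a \in A -> M * deg (relc c) a B < #|B|)].
Proof.
move=> hS.
have [x0 _] : exists x, x \in S by apply/card_gt0P; lia.
have hh : #|S| %/ 2 <= #|S| by apply: leq_div.
have [W0 [W0S hW0]] := subset_card hh.
pose R0 := S :\: W0.
have dis : [disjoint W0 & R0] by rewrite disjoints_subset; apply/subsetP => x xW; rewrite !inE xW.
have hR0 : #|S| %/ 2 <= #|R0| by rewrite cardsDS // hW0; have := leq_divM #|S| 2; lia.
have [A [B [dAB sub hA hB hsp]]] := split_main esym x0 hfree M0 dis (eq_leq (Logic.eq_sym hW0)) hR0.
have US : W0 :|: R0 = S by apply/setP => x; rewrite !inE; case xW: (x \in W0); rewrite ?(subsetP W0S _ xW) ?andbT.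
rewrite US subUset in sub; case/andP: sub => AS BS.
have qpos : 0 < M ^ k by rewrite expn_gt0 M0.
have d2 := leq_divM #|S| 2.
have d2' : #|S| <= (#|S| %/ 2) * 2 + 1 by rewrite {1}(divn_eq #|S| 2); have := ltn_pmod #|S| (isT : 0 < 2); lia.
have hA' : #|S| <= QQ * #|A| by rewrite /QQ; nia.
have hB' : #|S| <= QQ * #|B| by rewrite /QQ; nia.
case: hsp => hsp.
- by exists A, B, false; split.
- by exists A, B, true; split.
Qed.

Lemma fam_lemma : forall n a b, a + b = n -> forall S : {set T}, 2 * QQ ^ n <= #|S| ->
  Fm false a S n \/ Fm true b S n.
Proof.
have Q0 := QQ_gt0.
elim=> [|n IH] a b hab S hS.
  have -> : a = 0 by lia.
  by left; exists [::].
case: a hab => [|a] hab; first by left; exists [::].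
case: b hab => [|b] hab; first by right; exists [::].
have hS2 : 2 <= #|S| by apply: leq_trans hS; rewrite -{1}(muln1 2) leq_mul2l expn_gt0 Q0 orbT.
have [A [B [c [dAB AS BS hA [hB hsp]]]]] := split_step hS2.
have hA2 : 2 * QQ ^ n <= #|A|.
  rewrite -(leq_pmul2l Q0); apply: leq_trans hA; apply: leq_trans hS.
  by rewrite expnS mulnCA.
have hBn : #|S| <= QQ ^ n.+1 * #|B|.
  by apply: leq_trans hB _; rewrite leq_mul2r expnS -{1}(muln1 QQ) leq_mul2l expn_gt0 Q0 !orbT.
have liftP : forall P : {set T}, P \subset A /\ #|A| <= QQ ^ n * #|P| -> P \subset S /\ #|S| <= QQ ^ n.+1 * #|P|.
  move=> P [PA hP]; split; first exact: subset_trans PA AS.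
  by apply: leq_trans hA _; rewrite expnS -mulnA leq_mul2l hP orbT.
have consF : forall c' m, c' = c -> Fm c' m A n -> Fm c' m.+1 S n.+1.
  move=> c' m -> [fam [sz gd hP]]; exists (B :: fam); split => //=.
  - by rewrite sz.
  - split => //.
      rewrite disjoint_sym disjoints_subset.
      apply: subset_trans (famU_sub (fun P Pf => proj1 (hP P Pf))) _.
      by rewrite -disjoints_subset.
    move=> x; rewrite inE => /hasP [P Pf xP]; apply: hsp; exact: (subsetP (proj1 (hP P Pf))).
  - move=> P; rewrite inE => /orP[/eqP ->|Pf]; first by split.
    exact: liftP (hP P Pf).
have passF : forall c' m, Fm c' m A n -> Fm c' m S n.+1.
  move=> c' m [fam [sz gd hP]]; exists fam; split => // P Pf; exact: liftP (hP P Pf).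
case: c hsp consF => hsp consF.
- have := IH a.+1 b ltac:(lia) A hA2.
  case=> H; [left; exact: passF | right; exact: consF].
- have := IH a b.+1 ltac:(lia) A hA2.
  case=> H; [left; exact: consF | right; exact: passF].
Qed.

End Family.


Lemma ce_path (T : finType) (e : rel T) k :
  contains_induced (ce e) (path_rel k) -> contains_induced e (copath_rel k).
Proof.
move=> [g [gi hg]]; exists g; split => // i j ij.
have := hg i j ij; rewrite /ce /copath_rel ij /=.
have -> : (g i != g j) by apply/negP => /eqP /gi /eqP; rewrite (negbTE ij).
by move=> <-; rewrite negbK.
Qed.

Definition pure_pair (T : finType) (e : rel T) (N : nat) (S X Y : {set T}) :=
  [/\ X \subset S, Y \subset S, [disjoint X & Y], #|S| <= N * #|X|
    & #|S| <= N * #|Y| /\ (complete_pair e X Y \/ anticomplete_pair e X Y)].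

Definition rr k := 40 * k.
Definition LL k := QQ k (rr k) ^ (2 * rr k).
Definition NN k := 4 * LL k.

Lemma LL_gt0 k : 0 < k -> 0 < LL k.
Proof. by move=> k0; rewrite /LL expn_gt0 /QQ muln_gt0 expn_gt0 /rr; apply/orP; left; lia. Qed.

Section Main.
Variables (T : finType) (e : rel T).
Hypothesis esym : symmetric e.
Hypothesis eirr : irreflexive e.
Variable k : nat.
Hypothesis k0 : 0 < k.
Hypothesis hP : ~ contains_induced e (path_rel k).
Hypothesis hcP : ~ contains_induced e (copath_rel k).

Lemma small_pair (S : {set T}) N : 2 <= #|S| -> #|S| <= N -> exists X Y, pure_pair e N S X Y.
Proof.
move=> h2 hN.
have [x xS] : exists x, x \in S by apply/card_gt0P; lia.
have : 0 < #|S :\ x| by move: h2; rewrite (cardsD1 x S) xS; lia.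
case/card_gt0P => y; rewrite !inE => /andP[yx yS].
exists [set x], [set y]; split; rewrite ?cards1 ?muln1 ?sub1set //.
  by rewrite disjoints1 inE eq_sym.
split => //; case exy: (e x y); [left|right] => a b; rewrite !inE => /eqP-> /eqP->; by rewrite exy.
Qed.

Lemma relc_sym c : symmetric (relc e c).
Proof. by case: c => //=; apply: ce_sym. Qed.

Lemma from_family (S : {set T}) c fam : NN k < #|S| -> ~ (exists X Y, pure_pair e (NN k) S X Y) ->
  size fam = rr k -> fgood (rr k) (relc e c) fam ->
  (forall P, P \in fam -> P \subset S /\ #|S| <= LL k * #|P|) -> False.
Proof.
move=> hN H sz gd hp.
set r := rr k; set L := LL k; set n := #|S|; set f := relc e c.
have r0 : 0 < r by rewrite /r /rr; lia.
have L0 : 0 < L := LL_gt0 k0.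
have k40 : r = 40 * k by [].
set s := n %/ (2 * L).
have hsL : s * (2 * L) <= n by apply: leq_divM.
have hs : forall P, P \in fam -> 2 * s <= #|P|.
  move=> P /hp [_ hP']; rewrite -(leq_pmul2l L0); apply: (leq_trans _ hP'); nia.
have [W [Wsub hW hsum]] := trim (relc_sym c) gd hs.
rewrite sz -/r -/f in hW hsum.
have hsum' : \sum_(x in W) deg f x W <= 5 * r * s ^ 2.
  rewrite -(leq_pmul2l r0); nia.
have NNL : NN k = 4 * L by [].
have NN0 : 0 < NN k by rewrite NNL; lia.
set a := n %/ NN k + 1.
have hNa : n < NN k * a by rewrite /a addn1 mulnC ltn_ceil.
have ha : a <= s.
  have q1 : 1 <= n %/ NN k by rewrite leq_divRL // mul1n; exact: ltnW.
  have q2 : n %/ NN k * NN k <= n by apply: leq_divM.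
  rewrite /s leq_divRL; last lia.
  rewrite /a; rewrite NNL in q1 q2; nia.
have a0 : 0 < a by rewrite /a; lia.
have s0 : 0 < s by lia.
set W' := [set x in W | deg f x W <= 10 * s].
have mk := markov (fun x => deg f x W) W (10 * s).
rewrite -/W' in mk.
have W'W : W' \subset W by apply/subsetP => x; rewrite inE => /andP[].
have cW : #|W| = #|W'| + #|W :\: W'| by rewrite cardsDS //; have := subset_leq_card W'W; lia.
have m2 : #|W :\: W'| * (10 * s).+1 <= 5 * r * s ^ 2 by apply: leq_trans mk hsum'.
have hW' : r * s <= 2 * #|W'|.
  have : 2 * #|W :\: W'| * (5 * s) <= r * s * (5 * s) by nia.
  rewrite leq_pmul2r; last lia.
  lia.
have WS : W \subset S by apply: subset_trans Wsub _; apply: famU_sub => P /hp [].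
have W'S : W' \subset S by apply: subset_trans W'W WS.
have hna : noanti f W' a.
  move=> X Y XW YW dXY aX aY anti; apply: H; exists X, Y; split.
  - exact: subset_trans XW W'S.
  - exact: subset_trans YW W'S.
  - done.
  - by apply: ltnW; apply: leq_trans hNa _; rewrite leq_mul2l aX orbT.
  split; first by apply: ltnW; apply: leq_trans hNa _; rewrite leq_mul2l aY orbT.
  move: anti; rewrite /f; case: (c) => /= anti.
  + left => x y xX yY; move: (anti x y xX yY); rewrite /= /ce negb_and negbK.
    have -> : (x == y) = false by apply/negP => /eqP xy; move: dXY; rewrite disjoints_subset => /subsetP/(_ x xX);
      rewrite inE xy yY.
    by rewrite /= negbK.
  + by right.
have hdeg : forall x, x \in W' -> #|[set y in W' | f x y]| <= 10 * s.
  move=> x; rewrite inE => /andP[xW hx]; apply: leq_trans hx.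
  apply: subset_leq_card; apply/subsetP => y; rewrite !inE => /andP[/andP[yW _] ->]; by rewrite yW.
have cond : k * (10 * s + 3 * a) < #|W'| by nia.
have HH := gyarfas (relc_sym c) a0 hna hdeg k0 cond.
move: HH; rewrite /f; case: (c) => /= HH.
- by apply: hcP; apply: ce_path.
- exact: hP.
Qed.

Lemma main_pair (S : {set T}) : 2 <= #|S| -> exists X Y, pure_pair e (NN k) S X Y.
Proof.
move=> h2.
case: (leqP #|S| (NN k)) => hN; first exact: small_pair.
apply: NNPP => H.
set r := rr k.
have r0 : 0 < r by rewrite /r /rr; lia.
have hLS : 2 * QQ k r ^ (2 * r) <= #|S| by move: hN; rewrite /NN /LL -/r; lia.
have [[fam [sz gd hp]]|[fam [sz gd hp]]] := fam_lemma esym hP r0 (ltac:(lia) : r + r = 2 * r) hLS.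
- exact: (@from_family S false fam).
- exact: (@from_family S true fam).
Qed.

End Main.


From Stdlib Require Import Reals Lra Psatz.
Definition gam (N : nat) : R := (ln 2 / ln (INR N))%R.

Lemma lnN_pos N : (2 <= N)%N -> (0 < ln (INR N))%R.
Proof.
move=> hN; rewrite -ln_1; apply: ln_increasing; first lra.
have : (2 <= INR N)%R by change 2%R with (INR 2); apply: le_INR; apply/leP.
lra.
Qed.

Lemma RpowN N : (2 <= N)%N -> Rpower (INR N) (gam N) = 2%R.
Proof.
move=> hN; rewrite /Rpower /gam.
have h := lnN_pos hN.
have -> : (ln 2 / ln (INR N) * ln (INR N) = ln 2)%R by field; lra.
apply: exp_ln; lra.
Qed.

Lemma key_real N m x : (2 <= N)%N -> (1 <= m)%N -> (m <= N * x)%N ->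
  (Rpower (INR m) (gam N) <= 2 * Rpower (INR x) (gam N))%R.
Proof.
move=> hN hm hx.
have g0 : (0 <= gam N)%R.
  rewrite /gam; apply: Rle_mult_inv_pos; [rewrite -ln_1; apply: Rlt_le; apply: ln_increasing; lra|].
  exact: lnN_pos.
have x1 : (1 <= x)%N by move: hx hm; case: x; rewrite ?muln0 //; lia.
have Nx : (0 < INR N)%R by apply: lt_0_INR; apply/ltP; lia.
have xx : (0 < INR x)%R by apply: lt_0_INR; apply/ltP; lia.
have mm : (0 < INR m)%R by apply: lt_0_INR; apply/ltP; lia.
apply: Rle_trans (_ : Rpower (INR N * INR x) (gam N) <= _)%R.
  apply: Rle_Rpower_l => //; split => //; rewrite -mult_INR; apply: le_INR; apply/leP.
  done.
by rewrite -Rpower_mult_distr // RpowN //; lra.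
Qed.

Section P2.
Variables (T : finType) (e : rel T).
Hypothesis esym : symmetric e.
Hypothesis eirr : irreflexive e.
Variable k : nat.
Hypothesis k0 : (0 < k)%N.
Hypothesis hP : ~ contains_induced e (path_rel k).
Hypothesis hcP : ~ contains_induced e (copath_rel k).

Lemma NN2 : (2 <= NN k)%N.
Proof. by have := LL_gt0 k0; rewrite /NN; lia. Qed.

Lemma clique_union (X Y K1 K2 : {set T}) : complete_pair e X Y -> K1 \subset X -> K2 \subset Y ->
  is_clique e K1 -> is_clique e K2 -> is_clique e (K1 :|: K2).
Proof.
move=> cp /subsetP s1 /subsetP s2 c1 c2 x y; rewrite !inE => /orP[x1|x2] /orP[y1|y2] xy.
- exact: c1.
- exact: cp (s1 _ x1) (s2 _ y2).
- by rewrite esym; exact: cp (s1 _ y1) (s2 _ x2).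
- exact: c2.
Qed.

Lemma stable_union (X Y K1 K2 : {set T}) : anticomplete_pair e X Y -> K1 \subset X -> K2 \subset Y ->
  is_stable e K1 -> is_stable e K2 -> is_stable e (K1 :|: K2).
Proof.
move=> cp /subsetP s1 /subsetP s2 c1 c2 x y; rewrite !inE => /orP[x1|x2] /orP[y1|y2].
- exact: c1.
- exact: cp (s1 _ x1) (s2 _ y2).
- by rewrite esym; exact: cp (s1 _ y1) (s2 _ x2).
- exact: c2.
Qed.

Lemma card_disjU (A B : {set T}) : [disjoint A & B] -> #|A :|: B| = (#|A| + #|B|)%N.
Proof. by move=> d; rewrite cardsU (disjoint_setI0 d) cards0 subn0. Qed.

Lemma disj_sub (X Y A B : {set T}) : [disjoint X & Y] -> A \subset X -> B \subset Y -> [disjoint A & B].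
Proof.
move=> d AX BY; rewrite disjoints_subset; apply: subset_trans AX _.
apply: subset_trans (_ : ~: Y \subset ~: B); first by rewrite -disjoints_subset.
by rewrite setCS.
Qed.

Definition CI (S : {set T}) :=
  exists K I : {set T}, [/\ K \subset S, I \subset S, is_clique e K, is_stable e I &
    (Rpower (INR #|S|) (gam (NN k)) <= INR (#|K| * #|I|))%R].

Lemma ci_all : forall m (S : {set T}), (#|S| <= m)%N -> (1 <= #|S|)%N -> CI S.
Proof.
elim=> [|m IH] S hm h1; first lia.
case: (leqP #|S| 1) => hS.
  have S1 : #|S| = 1%N by lia.
  exists S, S; split => //.
  - move=> x y xS yS xy; exfalso; move: S1 => /eqP/cards1P [z Sz].
    by move: xS yS xy; rewrite Sz !inE => /eqP-> /eqP->; rewrite eqxx.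
  - move=> x y xS yS; case: (eqVneq x y) => [->|xy]; first by rewrite eirr.
    by exfalso; move: S1 => /eqP/cards1P [z Sz]; move: xS yS xy; rewrite Sz !inE => /eqP-> /eqP->; rewrite eqxx.
  - rewrite S1 /Rpower ln_1 Rmult_0_r exp_0 /=; lra.
have [X [Y [XS YS dXY hX [hY pp]]]] := main_pair esym k0 hP hcP hS.
have N2 := NN2.
have X1 : (1 <= #|X|)%N by move: hX; case: #|X|; rewrite ?muln0 //; lia.
have Y1 : (1 <= #|Y|)%N by move: hY; case: #|Y|; rewrite ?muln0 //; lia.
have cXY : (#|X| + #|Y| <= #|S|)%N by rewrite -card_disjU // subset_leq_card // subUset XS YS.
have [KX [IX [KXs IXs cKX sIX hXr]]] := IH X ltac:(lia) X1.
have [KY [IY [KYs IYs cKY sIY hYr]]] := IH Y ltac:(lia) Y1.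
have kX := key_real N2 (ltnW hS) hX.
have kY := key_real N2 (ltnW hS) hY.
have goal_of : forall K I : {set T}, K \subset S -> I \subset S -> is_clique e K -> is_stable e I ->
    (#|KX| * #|IX| + #|KY| * #|IY| <= #|K| * #|I|)%N -> CI S.
  move=> K I KS IS cK sI hKI; exists K, I; split => //.
  apply: Rle_trans (_ : INR (#|KX| * #|IX| + #|KY| * #|IY|) <= _)%R; last by apply: le_INR; apply/leP.
  rewrite plus_INR; lra.
have dK := disj_sub dXY KXs KYs.
have dI := disj_sub dXY IXs IYs.
have subU : forall A B : {set T}, A \subset X -> B \subset Y -> A :|: B \subset S.
  by move=> A B AX BY; rewrite subUset (subset_trans AX XS) (subset_trans BY YS).
case: pp => [cp|ap].
- have cU := clique_union cp KXs KYs cKX cKY.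
  case: (leqP #|IY| #|IX|) => hI.
  + apply: (goal_of _ IX (subU _ _ KXs KYs) (subset_trans IXs XS) cU sIX).
    rewrite card_disjU //; nia.
  + apply: (goal_of _ IY (subU _ _ KXs KYs) (subset_trans IYs YS) cU sIY).
    rewrite card_disjU //; nia.
- have sU := stable_union ap IXs IYs sIX sIY.
  case: (leqP #|KY| #|KX|) => hK.
  + apply: (goal_of KX _ (subset_trans KXs XS) (subU _ _ IXs IYs) cKX sU).
    rewrite card_disjU //; nia.
  + apply: (goal_of KY _ (subset_trans KYs YS) (subU _ _ IXs IYs) cKY sU).
    rewrite card_disjU //; nia.
Qed.

End P2.

Lemma final_sq (P a b : R) : (0 < P)%R -> (0 <= b)%R -> (b <= a)%R -> (P * P <= a * b)%R -> (P <= a)%R.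
Proof. move=> *; nra. Qed.

Theorem theorem4 :
  (forall k : nat, (0 < k)%N ->
    exists c : R, (0 < c)%R /\
      forall (T : finType) (e : rel T),
        simple_graph e -> (2 <= #|T|)%N ->
        ~ contains_induced e (path_rel k) -> ~ contains_induced e (copath_rel k) ->
        exists X Y : {set T},
          [disjoint X & Y] /\
          (c * INR #|T| <= INR #|X|)%R /\ (c * INR #|T| <= INR #|Y|)%R /\
          (complete_pair e X Y \/ anticomplete_pair e X Y))
  /\
  (forall k : nat, (0 < k)%N ->
    exists c' : R, (0 < c')%R /\
      forall (T : finType) (e : rel T),
        simple_graph e -> (1 <= #|T|)%N ->
        ~ contains_induced e (path_rel k) -> ~ contains_induced e (copath_rel k) ->
        exists S : {set T}, (is_clique e S \/ is_stable e S) /\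
          (Rpower (INR #|T|) c' <= INR #|S|)%R).
Proof.
split.
- move=> k k0.
  have N2 := NN2 k0.
  have Npos : (0 < INR (NN k))%R by apply: lt_0_INR; apply/ltP; lia.
  exists (/ INR (NN k))%R; split; first exact: Rinv_0_lt_compat.
  move=> T e [esym eirr] hT hP hcP.
  have hS : (2 <= #|[set: T]|)%N by rewrite cardsT.
  have [X [Y [_ _ dXY hX [hY pp]]]] := main_pair esym k0 hP hcP hS.
  rewrite cardsT in hX hY.
  have conv : forall Z : {set T}, (#|T| <= NN k * #|Z|)%N -> (/ INR (NN k) * INR #|T| <= INR #|Z|)%R.
    move=> Z hZ.
    have : (INR #|T| <= INR (NN k) * INR #|Z|)%R by rewrite -mult_INR; apply: le_INR; apply/leP.
    move=> h; apply: Rle_trans (_ : / INR (NN k) * (INR (NN k) * INR #|Z|) <= _)%R.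
      by apply: Rmult_le_compat_l => //; apply: Rlt_le; apply: Rinv_0_lt_compat.
    rewrite -Rmult_assoc Rinv_l; lra.
  by exists X, Y; split => //; split; [exact: conv|split; [exact: conv|]].
- move=> k k0.
  have N2 := NN2 k0.
  have g0 : (0 < gam (NN k))%R.
    rewrite /gam; apply: Rdiv_lt_0_compat; last exact: lnN_pos.
    rewrite -ln_1; apply: ln_increasing; lra.
  exists (gam (NN k) / 2)%R; split; first lra.
  move=> T e [esym eirr] hT hP hcP.
  have [K [I [_ _ cK sI hKI]]] := ci_all esym eirr k0 hP hcP (leqnn #|[set: T]|) ltac:(by rewrite cardsT).
  rewrite cardsT mult_INR in hKI.
  set P := Rpower (INR #|T|) (gam (NN k) / 2).
  have P0 : (0 < P)%R by rewrite /P /Rpower; apply: exp_pos.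
  have PP : (P * P = Rpower (INR #|T|) (gam (NN k)))%R.
    by rewrite /P -Rpower_plus; congr Rpower; lra.
  case: (leqP #|I| #|K|) => hle.
  + exists K; split; first by left.
    apply: (final_sq P0 (pos_INR #|I|)); first by apply: le_INR; apply/leP.
    by rewrite PP.
  + exists I; split; first by right.
    apply: (final_sq P0 (pos_INR #|K|)); first by apply: le_INR; apply/leP; lia.
    by rewrite PP Rmult_comm.
Qed.
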